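(* Let $G$ be an abelian group that is torsion-free or cyclic of prime order. Let $A=\{a_1,\dots,a_{n+1}\}\subsetneq G$ be a proper subset of $G$ with $n+1$ distinct elements, and define $A_i=-a_i+A=\{-a_i+a: a\in A\}$ for $i\in[n]$. If $A$ is not a progression, then $\bigcap_{i\in[n]}A_i=\{0\}$.
   Context: A progression of length $k$ with difference $x$ and initial term $a$ ($x,a\in G$) is a subset of $G$ of the form $\{a,a+x,a+2x,\dots,a+(k-1)x\}$. *)

(* Defs.v *)
From HB Require Import structures.
From mathcomp Require Import all_boot all_order all_algebra.
Set Implicit Arguments. Unset Strict Implicit. Unset Printing Implicit Defensive.
Import GRing.Theory.
Local Open Scope ring_scope.

Definition torsion_free (G : zmodType) : Prop :=
  forall (x : G) (m : nat), (0 < m)%N -> x *+ m = 0 -> x = 0.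

Definition cyclic_of_prime_order (G : zmodType) : Prop :=
  exists (p : nat) (g : G),
    [/\ prime p, g *+ p = 0, g != 0 & forall x : G, exists k : nat, x = g *+ k].

Definition progression (G : zmodType) (k : nat) (a x : G) : G -> Prop :=
  fun y => exists2 j : nat, (j < k)%N & y = a + x *+ j.

Definition is_progression (G : zmodType) (S : G -> Prop) : Prop :=
  exists (k : nat) (a x : G), forall y, S y <-> progression k a x y.

(* Main.v *)
Require Import Defs.
From mathcomp Require Import all_boot all_order all_algebra.
Import GRing.Theory.
Local Open Scope ring_scope.

Lemma cyc_bound (G : zmodType) n (a : 'I_n.+1 -> G) p g (g0 : G) :
  prime p -> g *+ p = 0 -> (forall x : G, exists k : nat, x = g *+ k) ->
  injective a -> (forall j, a j <> g0) -> (n.+2 <= p)%N.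
Proof.
move=> pp gp gen ia hg0.
have exP : forall x : G, exists k : nat, x == g *+ k.
  by move=> x; have [k ->] := gen x; exists k.
have modE : forall k, g *+ k = g *+ (k %% p).
  move=> k; rewrite {1}(divn_eq k p) mulrnDr mulnC mulrnA gp mul0rn add0r //.
have p0 := prime_gt0 pp.
pose el (o : option 'I_n.+1) := if o is Some j then a j else g0.
pose f (o : option 'I_n.+1) : 'I_p := Ordinal (ltn_pmod (xchoose (exP (el o))) p0).
have fE : forall o, el o = g *+ f o.
  move=> o; rewrite /= -modE; exact/eqP/(xchooseP (exP (el o))).
have finj : injective f.
  move=> o1 o2 e; have : el o1 = el o2 by rewrite !fE e.
  case: o1 {e} => [j1|]; case: o2 => [j2|] //=.
  - by move/ia->.
  - by move=> e; case: (hg0 j1).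
  - by move=> e; case: (hg0 j2).
have := @leq_card _ _ f finj; by rewrite card_option !card_ord.
Qed.

Lemma torsion_p (G : zmodType) p g (x : G) d :
  prime p -> g *+ p = 0 -> (forall x : G, exists k : nat, x = g *+ k) ->
  (0 < d)%N -> (d < p)%N -> x *+ d = 0 -> x = 0.
Proof.
move=> pp gp gen d0 dp xd.
have xp : x *+ p = 0 by have [k ->] := gen x; rewrite -mulrnA mulnC mulrnA gp mul0rn.
have [u _ hu] := Bezoutl d (prime_gt0 pp).
have cop : coprime p d by rewrite prime_coprime // gtnNdvd.
move: hu; rewrite (eqP cop) => /dvdnP [c hc].
have : x *+ (1 + u * d) = x *+ (c * p) by rewrite hc.
by rewrite mulrnDr (mulnC u) mulrnA xd mul0rn addr0 (mulnC c) mulrnA xp mul0rn.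
Qed.

Theorem lemma3p11 (G : zmodType) (n : nat) (a : 'I_n.+1 -> G) :
  (torsion_free G \/ cyclic_of_prime_order G) ->
  injective a ->
  (exists g : G, forall j, a j <> g) ->
  ~ is_progression (fun y : G => exists j, y = a j) ->
  forall y : G,
    (forall i : 'I_n.+1, (i < n)%N -> exists j : 'I_n.+1, y = - a i + a j) <-> y = 0.
Proof.
move=> HG ia [g0 hg0] nprog y; split; last first.
  by move=> -> i _; exists i; rewrite addNr.
move=> H; apply/eqP/negPn/negP => y0; apply: nprog.
have NT : forall d, (0 < d)%N -> (d <= n.+1)%N -> y *+ d = 0 -> False.
  move=> d d0 dn yd; case: HG => [tf|[p [g [pp gp gnz gen]]]].
    by move: y0; rewrite (tf y d d0 yd) eqxx.
  have pb := @cyc_bound _ _ _ _ _ _ pp gp gen ia hg0.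
  have dp : (d < p)%N by apply: leq_trans pb.
  by move: y0; rewrite (@torsion_p _ _ _ _ _ pp gp gen d0 dp yd) eqxx.
have injm : forall m1 m2, (m1 <= n.+1)%N -> (m2 <= n.+1)%N -> y *+ m1 = y *+ m2 -> m1 = m2.
  suff W : forall m1 m2, (m1 <= m2)%N -> (m2 <= n.+1)%N -> y *+ m1 = y *+ m2 -> m1 = m2.
    move=> m1 m2 h1 h2 e; case: (leqP m1 m2) => le; first exact: W.
    by symmetry; apply: W => //; apply: ltnW.
  move=> m1 m2 le h2 e; apply/eqP; rewrite eqn_leq le /= leqNgt; apply/negP => lt.
  have h1 : (0 < m2 - m1)%N by rewrite subn_gt0.
  have h3 : (m2 - m1 <= n.+1)%N by rewrite (leq_trans (leq_subr _ _)).
  apply: (NT (m2 - m1)%N h1 h3).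
  rewrite -(subnKC le) mulrnDr in e; move/eqP: e; rewrite -{1}[y *+ m1]addr0 => /eqP /addrI e.
  by rewrite -e.
have Hstep : forall i : 'I_n.+1, i != ord_max -> exists j, a j = a i + y.
  move=> i hi; have hin : (i < n)%N.
    rewrite ltn_neqAle -ltnS ltn_ord andbT; apply: contra hi => /eqP e.
    by apply/eqP/val_inj.
  by have [j e] := H i hin; exists j; rewrite e addNKr.
have reach : forall j, exists m : 'I_n.+1, a j + y *+ m == a ord_max.
  move=> j; case: (boolP [exists m : 'I_n.+1, a j + y *+ m == a ord_max]) => [/existsP //|/existsPn hn].
  exfalso.
  have all : forall m, (m <= n.+1)%N -> exists i, a i == a j + y *+ m.
    elim=> [|m IH] hm; first by exists j; rewrite mulr0n addr0.
    have [i /eqP ei] := IH (ltnW hm).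
    have ne : i != ord_max.
      apply/eqP => ei'; have := hn (Ordinal (hm : (m < n.+1)%N)).
      by rewrite /= -ei ei' eqxx.
    by have [k ek] := Hstep i ne; exists k; rewrite ek ei mulrSr addrA.
  pose f (m : 'I_n.+2) := xchoose (all m (ltn_ord m)).
  have finj : injective f.
    move=> m1 m2 e; apply/val_inj; apply: injm; [by rewrite -ltnS ltn_ord|by rewrite -ltnS ltn_ord|].
    have := xchooseP (all m1 (ltn_ord m1)); have := xchooseP (all m2 (ltn_ord m2)).
    rewrite -/(f m1) -/(f m2) e => /eqP -> /eqP /addrI h.
    by rewrite h.
  by have := @leq_card _ _ f finj; rewrite !card_ord ltnn.
pose phi j := xchoose (reach j).
have phiE : forall j, a j + y *+ phi j = a ord_max by move=> j; apply/eqP/(xchooseP (reach j)).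
have phiinj : injective phi.
  move=> j1 j2 e; apply: ia; apply: (@addIr _ (y *+ phi j1)).
  by rewrite {2}e !phiE.
have [psi psiphi phipsi] := injF_bij phiinj.
exists n.+1, (a ord_max - y *+ n), y => z /=; split.
  move=> [j ->]; exists (n - phi j)%N; first by rewrite ltnS leq_subr.
  have en : y *+ n = y *+ phi j + y *+ (n - phi j)%N by rewrite -mulrnDr subnKC // -ltnS.
  by rewrite -(phiE j) en opprD !addrA addrK addrNK.
move=> [t ht ->].
have hm : (n - t < n.+1)%N by rewrite ltnS leq_subr.
exists (psi (Ordinal hm)).
have en : y *+ n = y *+ (n - t)%N + y *+ t by rewrite -mulrnDr subnK.
by rewrite -(phiE (psi (Ordinal hm))) phipsi /= en opprD !addrA addrK addrNK.
Qed.
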